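(* Let $n\ge1$, let $a_1,\dots,a_n\ge2$ be integers, $d_0=1$, $d_i=a_1\cdots a_i$, and $I'_n=\{\kappa\in\{1,\dots,d_n\}\mid a_n\nmid\kappa\}$. Let $K_n:=\{\mathbf{k}=(k_1,\dots,k_n)\in\mathbb{Z}^n\mid 0\le k_i\le a_i-1\ (i=1,\dots,n-1),\ 0\le k_n\le a_n-2\}$. Then the map $$\psi:K_n\to I'_n,\qquad \psi(k_1,\dots,k_n):=\sum_{l=1}^n(-1)^{l-1}\frac{d_n}{d_l}(k_l+1)$$ is a well-defined bijection between sets of $d_n-d_{n-1}$ elements, and it satisfies $\omega^{(n)}_{\psi(\mathbf{k}),i}=\omega^{(n)}_{\mathbf{k},i}$ for all $\mathbf{k}\in K_n$ and $i=1,\dots,n$. In particular $\psi(0,\dots,0)=\sum_{l=1}^n(-1)^{l-1}\frac{d_n}{d_l}$.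
   Context: Here, for $\mathbf{k}\in\mathbb{Z}^n$, $(\omega^{(n)}_{\mathbf{k},1},\dots,\omega^{(n)}_{\mathbf{k},n}):=(k_1+1,\dots,k_n+1)\mathbb{E}^{-T}$ with $\mathbb{E}=(a_i\delta_{i,j}+\delta_{i+1,j})_{i,j=1}^n$ and $\mathbb{E}^{-T}=(\mathbb{E}^{-1})^T$; and for $\kappa\in I'_n$, $\omega^{(n)}_{\kappa,i}:=(-1)^{i-1}\frac{d_{i-1}}{d_n}\kappa-\lfloor(-1)^{i-1}\frac{d_{i-1}}{d_n}\kappa\rfloor$. *)

(* Defs.v *)
From HB Require Import structures.
From mathcomp Require Import all_boot all_order all_algebra.
Set Implicit Arguments. Unset Strict Implicit. Unset Printing Implicit Defensive.
Import Order.TTheory GRing.Theory Num.Theory.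
Local Open Scope ring_scope.

(* Conventions: the integers a_1,...,a_n are given by a : nat -> nat, used at
   indices 1..n.  Vectors k = (k_1,...,k_n) in Z^n are row vectors 'rV[int]_n,
   with k_l stored at column l-1 (0-based ordinal). *)

Definition d (a : nat -> nat) (i : nat) : nat := (\prod_(1 <= j < i.+1) a j)%N.

Definition inK (a : nat -> nat) (n : nat) (k : 'rV[int]_n) : bool :=
  [forall l : 'I_n, (0 <= k 0 l) &&
     (k 0 l <= (a l.+1)%:Z - (if l.+1 == n then 2 else 1))].

Definition inIp (a : nat -> nat) (n : nat) (kappa : int) : bool :=
  (1 <= kappa) && (kappa <= (d a n)%:Z) && ~~ ((a n)%:Z %| kappa)%Z.

Definition psi (a : nat -> nat) (n : nat) (k : 'rV[int]_n) : int :=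
  \sum_(l < n) (-1) ^+ l * ((d a n %/ d a l.+1)%N)%:Z * (k 0 l + 1).

Definition Emx (a : nat -> nat) (n : nat) : 'M[rat]_n :=
  \matrix_(i < n, j < n)
    ((a i.+1)%:R * (i == j :> nat)%:R + (i.+1 == j :> nat)%:R).

Definition omega_vec (a : nat -> nat) (n : nat) (k : 'rV[int]_n) : 'rV[rat]_n :=
  (map_mx (fun z : int => z%:~R) (k + const_mx 1)) *m (invmx (Emx a n))^T.

(* omega_{kappa,i} for i = i0+1 (i0 : 'I_n is 0-based):
   x - floor x  with  x = (-1)^(i-1) d_{i-1}/d_n kappa *)
Definition omega_kappa (a : nat -> nat) (n : nat) (kappa : int) (i0 : 'I_n) : rat :=
  let x : rat := (-1) ^+ i0 * ((d a i0)%:R / (d a n)%:R) * kappa%:~R in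
  x - (Num.floor x)%:~R.

Arguments d a i : clear implicits.
Arguments inK a n k : clear implicits.
Arguments inIp a n kappa : clear implicits.
Arguments psi a n k : clear implicits.
Arguments Emx a n : clear implicits.
Arguments omega_vec a n k : clear implicits.
Arguments omega_kappa a n kappa i0 : clear implicits.

(* Main.v *)
Require Import Defs.
From HB Require Import structures.
From mathcomp Require Import all_boot all_order all_algebra.
From mathcomp Require Import zify ring lra.
Import Order.TTheory GRing.Theory Num.Theory.
Set Implicit Arguments. Unset Strict Implicit. Unset Printing Implicit Defensive.
Local Open Scope ring_scope.
Fixpoint Phi (a : nat -> nat) (f : nat -> int) (m : nat) : int :=
  if m is m'.+1 then (a m)%:Z * Phi a f m' + (-1) ^+ m' * (f m' + 1) else 0.

Definition box (a : nat -> nat) (m : nat) (f : nat -> int) :=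
  forall l, (l < m)%N -> 0 <= f l <= (a l.+1)%:Z - 1.

Lemma dS a m : d a m.+1 = (d a m * a m.+1)%N.
Proof. by rewrite /d big_nat_recr. Qed.

Lemma d0 a : d a 0 = 1%N.
Proof. by rewrite /d big_geq. Qed.

Lemma d_dvd a i j : (i <= j)%N -> (d a i %| d a j)%N.
Proof.
elim: j => [|j IH]; first by rewrite leqn0 => /eqP ->.
rewrite leq_eqVlt => /orP [/eqP -> //|]; rewrite ltnS => /IH h.
by rewrite dS dvdn_mulr.
Qed.

Lemma d_gt0 a n (ha : forall i, (1 <= i <= n)%N -> (2 <= a i)%N) m :
  (m <= n)%N -> (0 < d a m)%N.
Proof.
elim: m => [|m IH] hm; first by rewrite d0.
rewrite dS muln_gt0 IH ?(ltnW hm) //=.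
have := ha m.+1; rewrite hm /= => /(_ isT); lia.
Qed.

Lemma Phi_ext a f g m : (forall l, (l < m)%N -> f l = g l) -> Phi a f m = Phi a g m.
Proof.
elim: m => [//|m IH] h /=; rewrite IH ?h // => l hl; apply: h; lia.
Qed.

Lemma sum_Phi a n (ha : forall i, (1 <= i <= n)%N -> (2 <= a i)%N) (f : nat -> int) m :
  (m <= n)%N ->
  \sum_(l < m) (-1) ^+ l * ((d a m %/ d a l.+1)%N)%:Z * (f l + 1) = Phi a f m.
Proof.
elim: m => [|m IH] hm; first by rewrite big_ord0.
rewrite big_ord_recr /= -IH ?(ltnW hm) // divnn (d_gt0 ha) // mulr1 mulr_sumr.
congr (_ + _); apply: eq_bigr => l _.
rewrite dS -divn_mulAC; last by apply: d_dvd; have := ltn_ord l; lia.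
rewrite PoszM; ring.
Qed.

Definition rng (m : nat) (D t : int) :=
  if odd m then (1 <= t <= D) else (0 <= t <= D - 1).

Lemma box_le a m m' f : (m' <= m)%N -> box a m f -> box a m' f.
Proof. move=> h hb l hl; apply: hb; lia. Qed.

Lemma a_ge2 a n (ha : forall i, (1 <= i <= n)%N -> (2 <= a i)%N) m :
  (m < n)%N -> 2 <= (a m.+1)%:Z.
Proof. move=> hm; have := ha m.+1; rewrite hm /= => /(_ isT); lia. Qed.

Lemma Phi_range a n (ha : forall i, (1 <= i <= n)%N -> (2 <= a i)%N) f m :
  (m <= n)%N -> box a m f -> rng m (d a m)%:Z (Phi a f m).
Proof.
rewrite /rng; elim: m => [|m IH] hm hb /=; first by rewrite d0.
have := IH (ltnW hm) (box_le (leqnSn m) hb).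
have := hb m (ltnSn m). have := a_ge2 ha hm.
rewrite dS PoszM -signr_odd.
set A := (a m.+1)%:Z; set D := (d a m)%:Z; set P := Phi a f m.
case: (odd m) => /=; rewrite ?expr1 ?expr0 => hA hr hP; nia.
Qed.

Lemma Phi_inj a n (ha : forall i, (1 <= i <= n)%N -> (2 <= a i)%N) f g m :
  (m <= n)%N -> box a m f -> box a m g -> Phi a f m = Phi a g m ->
  forall l, (l < m)%N -> f l = g l.
Proof.
elim: m => [|m IH] hm hf hg /=; first by [].
have := hf m (ltnSn m); have := hg m (ltnSn m). have := a_ge2 ha hm.
rewrite -signr_odd.
set A := (a m.+1)%:Z; set P := Phi a f m; set Q := Phi a g m.
have H : forall P Q r s : int, 1 <= r <= A -> 1 <= s <= A -> A * P + r = A * Q + s ->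
   r = s /\ P = Q.
  move=> P' Q' r s hr hs e.
  have [hPQ|[hPQ|hPQ]] : P' < Q' \/ Q' < P' \/ P' = Q' by lia.
  - nia.
  - nia.
  - subst; lia.
case: (odd m) => /=; rewrite ?expr1 ?expr0 => hA hgm hfm e.
- have [e1 e2] := H Q P (f m + 1) (g m + 1) ltac:(lia) ltac:(lia) ltac:(lia).
  move=> l; rewrite ltnS leq_eqVlt => /orP [/eqP ->|hl]; first by lia.
  apply: IH => //; [exact: ltnW|exact: box_le (leqnSn m) hf|exact: box_le (leqnSn m) hg].
- have [e1 e2] := H P Q (f m + 1) (g m + 1) ltac:(lia) ltac:(lia) ltac:(lia).
  move=> l; rewrite ltnS leq_eqVlt => /orP [/eqP ->|hl]; first by lia.
  apply: IH => //; [exact: ltnW|exact: box_le (leqnSn m) hf|exact: box_le (leqnSn m) hg].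
Qed.

Lemma Phi_surj a n (ha : forall i, (1 <= i <= n)%N -> (2 <= a i)%N) m :
  (m <= n)%N -> forall t, rng m (d a m)%:Z t ->
  exists f, box a m f /\ Phi a f m = t.
Proof.
rewrite /rng; elim: m => [|m IH] hm t /=.
  rewrite d0 => ht; exists (fun _ => 0); split; [by move=> l|lia].
have hA := a_ge2 ha hm.
rewrite dS PoszM.
set A := (a m.+1)%:Z; set D := (d a m)%:Z.
have hD : 1 <= D by have := d_gt0 ha (ltnW hm); rewrite /D; lia.
have hq := divz_eq t A. have hq1 := divz_eq (t - 1) A.
have hr : 0 <= (t %% A)%Z < A by lia.
have hr1 : 0 <= ((t - 1) %% A)%Z < A by lia.
move: hq hq1 hr hr1 (IH (ltnW hm)).
set q := (t %/ A)%Z; set r := (t %% A)%Z.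
set q1 := ((t - 1) %/ A)%Z; set r1 := ((t - 1) %% A)%Z.
rewrite -signr_odd.
case: (odd m) => /= hq hq1 hr hr1 IH' ht; rewrite ?expr1 ?expr0.
- have [f [hf ef]] := IH' (q + 1) ltac:(nia).
  exists (fun l => if l == m then A - r - 1 else f l); split.
  + move=> l; rewrite ltnS leq_eqVlt => /orP [/eqP ->|hl]; first by rewrite eqxx; lia.
    by rewrite (_ : l == m = false) ?hf //; apply/negbTE; rewrite neq_ltn hl.
  + rewrite eqxx (@Phi_ext _ _ f); first by rewrite ef; lia.
    by move=> l hl; rewrite (_ : l == m = false) //; apply/negbTE; rewrite neq_ltn hl.
- have [f [hf ef]] := IH' q1 ltac:(nia).
  exists (fun l => if l == m then r1 else f l); split.
  + move=> l; rewrite ltnS leq_eqVlt => /orP [/eqP ->|hl]; first by rewrite eqxx; lia.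
    by rewrite (_ : l == m = false) ?hf //; apply/negbTE; rewrite neq_ltn hl.
  + rewrite eqxx (@Phi_ext _ _ f); first by rewrite ef; lia.
    by move=> l hl; rewrite (_ : l == m = false) //; apply/negbTE; rewrite neq_ltn hl.
Qed.

Lemma ndvd (A P r : int) : 1 <= r <= A - 1 -> ~~ (A %| A*P + r)%Z.
Proof. move=> h; apply/negP => /dvdz_mod0P. rewrite mulrC modzMDl modz_small; lia. Qed.

Definition kf (n : nat) (k : 'rV[int]_n.+1) : nat -> int := fun l => k 0 (inord l).

Lemma psi_kf a n (ha : forall i, (1 <= i <= n.+1)%N -> (2 <= a i)%N) k :
  psi a n.+1 k = Phi a (kf k) n.+1.
Proof.
rewrite /psi -(sum_Phi ha) //; apply: eq_bigr => l _; by rewrite /kf inord_val.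
Qed.

Lemma inKP a n k : inK a n.+1 k -> box a n.+1 (kf k) /\ kf k n <= (a n.+1)%:Z - 2.
Proof.
move=> /forallP h; split.
- move=> l hl; have := h (inord l); rewrite /kf inordK //; case: eqP => _ /andP[]; lia.
- have := h (inord n); rewrite /kf inordK // eqxx; lia.
Qed.

Lemma row_inK a n (f : nat -> int) : box a n.+1 f -> f n <= (a n.+1)%:Z - 2 ->
  inK a n.+1 (\row_(l < n.+1) f l).
Proof.
move=> hb hl; apply/forallP => l; rewrite mxE.
move: (hb l (ltn_ord l)); case: eqP => [[e]|_]; rewrite ?e; lia.
Qed.

Lemma kf_row n (f : nat -> int) l : (l < n.+1)%N -> kf (\row_(l < n.+1) f l) l = f l.
Proof. by move=> hl; rewrite /kf mxE inordK. Qed.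

Lemma kf_inj n (k k' : 'rV[int]_n.+1) : (forall l, (l < n.+1)%N -> kf k l = kf k' l) -> k = k'.
Proof.
move=> h; apply/matrixP => i j; rewrite (ord1 i).
by have := h j (ltn_ord j); rewrite /kf inord_val.
Qed.

Lemma wd a n (ha : forall i, (1 <= i <= n.+1)%N -> (2 <= a i)%N) k :
  inK a n.+1 k -> inIp a n.+1 (psi a n.+1 k).
Proof.
move=> hk; rewrite (psi_kf ha); have [hb hl] := inKP hk.
have hr := Phi_range ha (leqnSn n) (box_le (leqnSn n) hb).
have hA := a_ge2 ha (ltnSn n).
have hf := hb n (ltnSn n).
move: hr hl hf; rewrite /rng /inIp /= dS PoszM -signr_odd.
set A := (a n.+1)%:Z; set D := (d a n)%:Z; set P := Phi a (kf k) n; set r := kf k n.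
case: (odd n) => /= hr hl hf; rewrite ?expr1 ?expr0.
- rewrite (_ : A * P + -1 * (r + 1) = A * (P - 1) + (A - r - 1)); last by ring.
  rewrite ndvd ?andbT; [apply/andP; split; nia | lia].
- rewrite (_ : A * P + 1 * (r + 1) = A * P + (r + 1)); last by ring.
  rewrite ndvd ?andbT; [apply/andP; split; nia | lia].
Qed.

Lemma surj a n (ha : forall i, (1 <= i <= n.+1)%N -> (2 <= a i)%N) t :
  inIp a n.+1 t -> exists2 k, inK a n.+1 k & psi a n.+1 k = t.
Proof.
move=> /andP [/andP [h1 h2] hnd].
have hA := a_ge2 ha (ltnSn n).
have ht : rng n.+1 (d a n.+1)%:Z t.
  rewrite /rng /=; case: (odd n) => /=; last by rewrite h1 h2.
  have : t != (d a n.+1)%:Z.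
    apply/eqP => e; move: hnd; rewrite e dS PoszM mulrC.
    by rewrite dvdz_mulr.
  lia.
have [f [hb ef]] := Phi_surj ha (leqnn _) ht.
have hfn : f n != (a n.+1)%:Z - 1.
  apply/eqP => e; move: hnd; rewrite -ef /= e.
  rewrite (_ : (a n.+1)%:Z * Phi a f n + (-1) ^+ n * ((a n.+1)%:Z - 1 + 1)
     = (a n.+1)%:Z * (Phi a f n + (-1) ^+ n)); last by ring.
  by rewrite dvdz_mulr.
have := hb n (ltnSn n).
exists (\row_(l < n.+1) f l).
  apply: row_inK => //; lia.
rewrite (psi_kf ha) -ef; apply: Phi_ext => l hl; exact: kf_row.
Qed.

Lemma inj a n (ha : forall i, (1 <= i <= n.+1)%N -> (2 <= a i)%N) :
  {in [pred k | inK a n.+1 k] &, injective (psi a n.+1)}.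
Proof.
move=> k k' /= hk hk'; rewrite !(psi_kf ha) => e.
have [hb _] := inKP hk; have [hb' _] := inKP hk'.
apply: kf_inj; apply: (Phi_inj ha (leqnn _) hb hb' e).
Qed.

Lemma Iseq a n (ha : forall i, (1 <= i <= n.+1)%N -> (2 <= a i)%N) :
  exists s : seq int, [/\ uniq s, (forall kappa, (kappa \in s) = inIp a n.+1 kappa)
       & size s = (d a n.+1 - d a n)%N].
Proof.
have hA := a_ge2 ha (ltnSn n).
set A := (a n.+1)%:Z in hA *.
exists [seq A * (q%:Z) + (r%:Z) | q <- iota 0 (d a n), r <- iota 1 (a n.+1).-1].
split.
- apply: allpairs_uniq; rewrite ?iota_uniq //.
  move=> [q r] [q' r'] /allpairsP [[x y] [/= hx hy [-> ->]]] /allpairsP [[x' y'] [/= hx' hy' [-> ->]]] /= e.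
  move: hy hy'; rewrite !mem_iota => hy hy'.
  have [hq|[hq|hq]] : (x < x')%N \/ (x' < x)%N \/ x = x' by lia.
  + exfalso; nia.
  + exfalso; nia.
  + subst; congr (_, _); lia.
- move=> t; apply/allpairsP/idP.
  + move=> [[q r] [/= hq hr ->]]; move: hq hr; rewrite !mem_iota => hq hr.
    rewrite /inIp dS PoszM ndvd ?andbT; last by lia.
    apply/andP; split; nia.
  + move=> /andP [/andP [h1 h2] hnd].
    have hq := divz_eq t A.
    have hr : 0 <= (t %% A)%Z < A by lia.
    have hr0 : (t %% A)%Z != 0 by apply: contra hnd => /eqP /dvdz_mod0P.
    exists (`|(t %/ A)%Z|%N, `|(t %% A)%Z|%N); rewrite /= !mem_iota.
    move: h2; rewrite dS PoszM => h2.
    set q := (t %/ A)%Z in hq *; set r := (t %% A)%Z in hr hr0 hq *.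
    have hq0 : 0 <= q by nia.
    have hqd : q < (d a n)%:Z by nia.
    split; try lia.
- rewrite size_allpairs !size_iota dS; have := hA; rewrite /A; nia.
Qed.

Lemma Kseq a n (ha : forall i, (1 <= i <= n.+1)%N -> (2 <= a i)%N) :
  exists s : seq 'rV[int]_n.+1, [/\ uniq s, (forall k, (k \in s) = inK a n.+1 k)
       & size s = (d a n.+1 - d a n)%N].
Proof.
have [sI [uI mI szI]] := Iseq ha.
have H : forall t : int, exists k : 'rV[int]_n.+1,
    (inIp a n.+1 t ==> (inK a n.+1 k && (psi a n.+1 k == t))).
  move=> t; case: (boolP (inIp a n.+1 t)) => h; last by exists 0.
  by have [k hk e] := surj ha h; exists k; rewrite hk e eqxx.
pose g t := xchoose (H t).
have hg : forall t, inIp a n.+1 t -> inK a n.+1 (g t) /\ psi a n.+1 (g t) = t.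
  move=> t ht; have := xchooseP (H t); move=> /implyP /(_ ht) /andP [h1 /eqP h2]; done.
exists (map g sI); split.
- rewrite map_inj_in_uniq // => x y hx hy e.
  rewrite mI in hx; rewrite mI in hy.
  by rewrite -(hg x hx).2 -(hg y hy).2 e.
- move=> k; apply/mapP/idP.
  + by move=> [t ht ->]; rewrite mI in ht; exact: (hg t ht).1.
  + move=> hk; exists (psi a n.+1 k); first by rewrite mI; exact: wd.
    have hw := wd ha hk.
    apply: (inj ha) => //; first by rewrite inE; exact: (hg _ hw).1.
    by rewrite (hg _ hw).2.
- by rewrite size_map.
Qed.


Lemma sum_delta (N c : nat) (F : nat -> rat) :
  \sum_(i < N) F i * (c == i :> nat)%:R = if (c < N)%N then F c else 0.
Proof.
elim: N => [|N IH]; first by rewrite big_ord0.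
rewrite big_ord_recr /= IH.
case: (ltngtP c N) => h.
- by rewrite mulr0 addr0 ltnS ltnW.
- by rewrite mulr0 addr0 ltnS leqNgt h.
- by rewrite h ltnSn mulr1 add0r.
Qed.


Lemma E_unit a n (ha : forall i, (1 <= i <= n)%N -> (2 <= a i)%N) :
  Emx a n \in unitmx.
Proof.
rewrite unitmxE -det_tr det_trig.
  rewrite unitfE; apply/prodf_neq0 => i _; rewrite !mxE eqxx mulr1.
  rewrite (_ : (i.+1 == i :> nat) = false) ?addr0 ?pnatr_eq0; last by apply/negbTE; rewrite neq_ltn ltnSn orbT.
  by have := ha i.+1; rewrite ltn_ord /= => /(_ isT) h; apply/eqP => e; rewrite e in h.
apply/forallP => i; apply/forallP => j; apply/implyP => h; apply/eqP.
rewrite mxE /Emx mxE.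
have -> : (j == i :> nat) = false by apply/negbTE; rewrite neq_ltn h orbT.
have -> : (j.+1 == i :> nat) = false by apply/negbTE; rewrite neq_ltn; apply/orP; right; apply: (ltn_trans h).
by rewrite mulr0 addr0.
Qed.

Lemma intr_nat (m : nat) : (m%:Z)%:~R = m%:R :> rat.
Proof. by []. Qed.

Lemma sgnE (R : pzRingType) j : (-1) ^+ j = (if odd j then -1 else 1) :> R.
Proof. by rewrite -signr_odd; case: odd. Qed.

Lemma PhiS a f m : Phi a f m.+1 = (a m.+1)%:Z * Phi a f m + (-1) ^+ m * (f m + 1).
Proof. by []. Qed.

Lemma frac_base (A U r : rat) : 2 <= A -> 1 <= r -> r <= A - 1 -> A * U = r -> 0 < U < 1.
Proof. move=> h1 h2 h3 e; apply/andP; split; nra. Qed.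
Lemma frac_step (A U V r : rat) : 2 <= A -> 1 <= r -> r <= A -> 0 < V -> V < 1 -> A * U + V = r -> 0 < U < 1.
Proof. move=> h1 h2 h3 h4 h5 e; apply/andP; split; nra. Qed.

Lemma omega a n (ha : forall i, (1 <= i <= n.+1)%N -> (2 <= a i)%N) k
  (hk : inK a n.+1 k) (i : 'I_n.+1) :
  omega_kappa a n.+1 (psi a n.+1 k) i = omega_vec a n.+1 k 0 i.
Proof.
have [hb hl] := inKP hk.
have hpsi := psi_kf ha k.
set f := kf k in hb hl hpsi.
set N := n.+1 in hpsi *.
have hDN : (d a N)%:R != 0 :> rat.
  by rewrite pnatr_eq0 -lt0n (d_gt0 ha).
pose u (j : nat) : rat :=
  (-1) ^+ j * ((d a j)%:R / (d a N)%:R * (Phi a f N)%:~R - (Phi a f j)%:~R).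
have uN : u N = 0 by rewrite /u divff // mul1r subrr mulr0.
have urec : forall j, (j < N)%N -> (a j.+1)%:R * u j + u j.+1 = (f j + 1)%:~R.
  move=> j hj; rewrite /u PhiS dS natrM !sgnE /=.
  rewrite !(intrD, intrM) !intr_nat.
  case: (odd j) => /=; rewrite ?intrN /=; field; exact: hDN.
have hA : forall j, (j < N)%N -> 2 <= (a j.+1)%:R :> rat.
  move=> j hj; rewrite ler_nat; have := ha j.+1; rewrite hj /=; exact.
have hf : forall j, (j < N)%N -> 1 <= (f j + 1)%:~R :> rat /\ (f j + 1)%:~R <= (a j.+1)%:R :> rat.
  move=> j hj; have := hb j hj; rewrite ler1z -intr_nat ler_int; lia.
have ub : forall t, (t <= n)%N -> 0 < u (n - t)%N < 1.
  elim=> [|t IH] ht.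
  - rewrite subn0; have := urec n (ltnSn n); rewrite uN addr0 => e.
    have hr2 : (f n + 1)%:~R <= ((a n.+1)%:Z - 1)%:~R :> rat.
      by rewrite ler_int; lia.
    move: hr2; rewrite intrB intr_nat (_ : (1%:~R : rat) = 1) // => hr2.
    have := hA n (ltnSn n); have [hf1 _] := hf n (ltnSn n).
    move=> _; exact: (frac_base (hA n (ltnSn n)) hf1 hr2 e).
  - have hj : (n - t.+1).+1 = (n - t)%N by lia.
    have hlt : (n - t.+1 < N)%N by rewrite /N; lia.
    have := urec _ hlt; have := hA _ hlt; have := hf _ hlt; rewrite hj.
    move=> [h1 h2] h3 e; have /andP [h4 h5] := IH (ltnW ht).
    exact: (frac_step h3 h1 h2 h4 h5 e).
have ui : forall j, (j < N)%N -> 0 < u j < 1.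
  by move=> j hj; have := ub (n - j)%N (leq_subr _ _); rewrite subKn.
have -> : omega_kappa a N (psi a N k) i = u i.
  rewrite /omega_kappa hpsi /=.
  have /andP [u0 u1] := ui i (ltn_ord i).
  set z := ((-1) ^+ i * Phi a f i).
  have ex : (-1) ^+ i * ((d a i)%:R / (d a N)%:R) * (Phi a f N)%:~R = z%:~R + u i.
    rewrite /u /z intrM !sgnE; case: odd; rewrite ?intrN (_ : (1%:~R : rat) = 1) //; ring.
  rewrite ex (@floor_def _ _ z); first by rewrite addrAC subrr add0r.
  rewrite intrD (_ : (1%:~R : rat) = 1) //; apply/andP; split; lra.
rewrite /omega_vec.
have hw : (\row_(j < N) u j) *m (Emx a N)^T = map_mx (fun z : int => z%:~R) (k + const_mx 1).
  apply/rowP => j; rewrite !mxE.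
  under eq_bigr => l _ do rewrite !mxE.
  rewrite (eq_bigr (fun l : 'I_N => ((a j.+1)%:R * u l) * (j == l :> nat)%:R + u l * (j.+1 == l :> nat)%:R)); last by move=> l _; ring.
  rewrite big_split /= (sum_delta N j (fun l => (a j.+1)%:R * u l)) (sum_delta N j.+1 u) ltn_ord.
  have -> : (if (j.+1 < N)%N then u j.+1 else 0) = u j.+1.
    case: ifP => // /negbT hj; have := ltn_ord j => hj'.
    by have -> : j.+1 = N by rewrite /N in hj hj' *; lia.
  rewrite urec // /f /kf inord_val.
  by [].
by rewrite -hw -mulmxA -trmx_mul mulVmx ?E_unit // trmx1 mulmx1 mxE.
Qed.


Unset Implicit Arguments.

Theorem proposition2p15 (n : nat) (a : nat -> nat)
    (hn : (1 <= n)%N) (ha : forall i, (1 <= i <= n)%N -> (2 <= a i)%N) :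
  (* well-defined: psi maps K_n into I'_n *)
  (forall k : 'rV[int]_n, inK a n k -> inIp a n (psi a n k)) /\
  (* injective on K_n *)
  {in [pred k | inK a n k] &, injective (psi a n)} /\
  (* surjective onto I'_n *)
  (forall kappa : int, inIp a n kappa ->
     exists2 k : 'rV[int]_n, inK a n k & psi a n k = kappa) /\
  (* K_n has d_n - d_{n-1} elements *)
  (exists s : seq 'rV[int]_n, [/\ uniq s, (forall k, (k \in s) = inK a n k)
       & size s = (d a n - d a n.-1)%N]) /\
  (* I'_n has d_n - d_{n-1} elements *)
  (exists s : seq int, [/\ uniq s, (forall kappa, (kappa \in s) = inIp a n kappa)
       & size s = (d a n - d a n.-1)%N]) /\
  (* omega_{psi(k),i} = omega_{k,i} *)
  (forall k : 'rV[int]_n, inK a n k ->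
     forall i : 'I_n, omega_kappa a n (psi a n k) i = omega_vec a n k 0 i) /\
  (* psi(0,...,0) *)
  psi a n 0 = \sum_(l < n) (-1) ^+ l * ((d a n %/ d a l.+1)%N)%:Z.
Proof.
case: n hn ha => [//|n] _ ha.
split; first by move=> k hk; exact: (wd ha hk).
split; first exact: (inj ha).
split; first by move=> t ht; exact: (surj ha ht).
split; first exact: (Kseq ha).
split; first exact: (Iseq ha).
split; first by move=> k hk i; exact: (omega ha hk i).
by rewrite /psi; apply: eq_bigr => l _; rewrite mxE add0r mulr1.
Qed.
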